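(* Let $p$ be an odd prime, $\alpha_r=\frac{(1/2)_r}{r!}$ for $r\ge0$ (where $(x)_r=x(x+1)\cdots(x+r-1)$), and $\gamma=(4^{p-1}-1)/p$. Let $r,r',t$ be integers $\ge0$ with $r=pr'+t$ and $t<p$. If $t>p/2$, then $p$ divides $\alpha_r$. If $t<p/2$, then $$\alpha_r\equiv\alpha_{r'}\alpha_t\left(1-\gamma p r'+2pr'\sum_{j=1}^{2t}\frac{(-1)^{j-1}}{j}\right)\pmod{p^2}.$$
   Context: Divisibility and congruences are in the ring $\mathbb{Z}_{(p)}$ of $p$-integral rationals. *)

(* Defs.v *)
From HB Require Import structures.
From mathcomp Require Import all_boot all_order all_algebra.
Set Implicit Arguments. Unset Strict Implicit. Unset Printing Implicit Defensive.
Import Order.TTheory GRing.Theory Num.Theory.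
Local Open Scope ring_scope.

(* x is p-integral: x lies in Z_(p), i.e. p does not divide the denominator *)
Definition pintegral (p : nat) (x : rat) : bool := ~~ (p %| `|denq x|)%N.

Definition pdvdq (p k : nat) (x : rat) : bool :=
  pintegral p (x / (p%:R ^+ k)).

Definition pcongr (p k : nat) (x y : rat) : bool := pdvdq p k (x - y).

Definition poch (x : rat) (r : nat) : rat := \prod_(i < r) (x + i%:R).

Definition alpha (r : nat) : rat := poch (1 / 2) r / (r`!)%:R.

Definition gammap (p : nat) : rat := ((4 : rat) ^+ (p.-1) - 1) / p%:R.

(* Main.v *)
Require Import Defs.
From HB Require Import structures.
From mathcomp Require Import all_boot all_order all_algebra.
From mathcomp Require Import cyclic.
From mathcomp Require Import ring lra zify.
Set Implicit Arguments. Unset Strict Implicit. Unset Printing Implicit Defensive.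
Import Order.TTheory GRing.Theory Num.Theory.
Local Open Scope ring_scope.

Definition fa (n : nat) : rat := (n%:R + 1/2) / (n.+1)%:R.

Lemma alpha0 : alpha 0 = 1.
Proof. by rewrite /alpha /poch big_ord0 fact0 divr1. Qed.

Lemma alphaS n : alpha n.+1 = alpha n * fa n.
Proof.
rewrite /alpha /poch /fa big_ord_recr /= factS natrM.
have h1 : (n`!)%:R != 0 :> rat by rewrite pnatr_eq0 -lt0n fact_gt0.
have h2 : (n.+1)%:R != 0 :> rat by rewrite pnatr_eq0.
rewrite -natr1 addrC in h2; by field; apply/andP; split.
Qed.

Lemma alphaD a b : alpha (a + b) = alpha a * \prod_(i < b) fa (a + i).
Proof.
elim: b => [|b IH]; first by rewrite addn0 big_ord0 mulr1.
by rewrite addnS alphaS IH big_ord_recr /= mulrA.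
Qed.

Lemma big_pair (R : Type) (idx : R) (op : Monoid.com_law idx) h (G : nat -> R) :
  \big[op/idx]_(i < h + h) G i = \big[op/idx]_(i < h) op (G i) (G (h + h - i.+1)%N).
Proof.
rewrite big_split_ord /= big_split /=; congr (op _ _).
rewrite (reindex_inj (@rev_ord_inj h)) /=.
apply: eq_bigr => i _; congr G; rewrite addnBA //.
Qed.

Lemma big_pair_odd (R : Type) (idx : R) (op : Monoid.com_law idx) h (G : nat -> R) :
  \big[op/idx]_(i < (h + h).+1) G i =
  op (\big[op/idx]_(i < h) op (G i) (G (h + h - i)%N)) (G h).
Proof.
rewrite -addnS big_split_ord /= big_ord_recl /= addn0 big_split /=.
rewrite -Monoid.mulmA [op (G h) _]Monoid.mulmC; congr (op _ (op _ _)).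
rewrite (reindex_inj (@rev_ord_inj h)) /=.
apply: eq_bigr => i _; congr G; rewrite /bump leq0n add1n subnSK // addnBA //; exact: ltnW.
Qed.

Section Padic.
Variables p h : nat.
Hypothesis pr : prime p.
Hypothesis hp : p = (h + h).+1.

Local Notation pint := (pintegral p).
Local Notation P := (p%:R : rat).

Lemma pintP x : reflect (exists a : int, exists b : nat, ~~ (p %| b)%N /\ x = a%:~R / b%:R) (pint x).
Proof.
apply: (iffP idP).
  move=> hH; exists (numq x), `|denq x|%N; split => //.
  rewrite -[in LHS](divq_num_den x); congr (_ / _); rewrite -absz_denq; by [].
move=> [a [b [pb ->]]].
have b0 : b != 0%N by apply: contraNneq pb => ->; rewrite dvdn0.
apply: contra pb => pd; apply: dvdn_trans pd _.
set y := a%:~R / b%:R : rat.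
have e : numq y * b%:Z = a * denq y.
  apply: (@intr_inj rat); rewrite !rmorphM /= numqE /y.
  rewrite -[(b%:Z)%:~R]/(b%:R) ; field; by rewrite pnatr_eq0.
have : (`|denq y| %| `|numq y| * b)%N.
  by rewrite -[b]/(`|b%:Z|%N) -abszM e abszM dvdn_mull.
by rewrite Gauss_dvdr // coprime_sym coprime_num_den.
Qed.

Lemma natzR (n : nat) : ((n%:Z)%:~R : rat) = n%:R. Proof. by []. Qed.

Lemma ndvd_neq0 b : ~~ (p %| b)%N -> (b%:R : rat) != 0.
Proof. by move=> hH; rewrite pnatr_eq0; apply: contraNneq hH => ->; rewrite dvdn0. Qed.

Lemma ndvdM a b : ~~ (p %| a)%N -> ~~ (p %| b)%N -> ~~ (p %| a * b)%N.
Proof. by move=> ha hb; rewrite Euclid_dvdM // negb_or ha hb. Qed.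

Lemma pintD x y : pint x -> pint y -> pint (x + y).
Proof.
move=> /pintP[a1 [b1 [h1 ->]]] /pintP[a2 [b2 [h2 ->]]]; apply/pintP.
exists (a1 * b2%:Z + a2 * b1%:Z), (b1 * b2)%N; split; first exact: ndvdM.
rewrite rmorphD !rmorphM /= !natzR; field.
by rewrite !ndvd_neq0.
Qed.

Lemma pintM x y : pint x -> pint y -> pint (x * y).
Proof.
move=> /pintP[a1 [b1 [h1 ->]]] /pintP[a2 [b2 [h2 ->]]]; apply/pintP.
exists (a1 * a2), (b1 * b2)%N; split; first exact: ndvdM.
rewrite !rmorphM /= ?natrM; field.
by rewrite !ndvd_neq0.
Qed.

Lemma pint_int (a : int) : pint a%:~R.
Proof.
apply/pintP; exists a, 1%N; split; first by rewrite dvdn1; apply: contraTneq (prime_gt1 pr) => ->.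
by rewrite divr1.
Qed.

Lemma pintN x : pint x -> pint (- x).
Proof. by move=> hH; rewrite -mulN1r; apply: pintM hH; exact: (pint_int (-1)). Qed.

Lemma pint_nat (n : nat) : pint n%:R.
Proof. exact: (pint_int n). Qed.

Lemma pintB x y : pint x -> pint y -> pint (x - y).
Proof. by move=> hx hy; apply: pintD hx (pintN hy). Qed.

Lemma pintV_nat (n : nat) : ~~ (p %| n)%N -> pint (n%:R)^-1.
Proof. by move=> hH; apply/pintP; exists 1, n; split => //; rewrite div1r. Qed.

Lemma pint_sum (I : Type) (r : seq I) (F : I -> rat) :
  (forall i, pint (F i)) -> pint (\sum_(i <- r) F i).
Proof. by move=> hH; elim/big_ind: _ => //; [exact: (pint_nat 0)| exact: pintD]. Qed.

Lemma pint_prod (I : Type) (r : seq I) (F : I -> rat) :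
  (forall i, pint (F i)) -> pint (\prod_(i <- r) F i).
Proof. by move=> hH; elim/big_ind: _ => //; [exact: (pint_nat 1)| exact: pintM]. Qed.


Lemma P_neq0 : P != 0.
Proof. by rewrite pnatr_eq0 -lt0n prime_gt0. Qed.

Lemma pdvdqP k x : reflect (exists2 y, pint y & x = P ^+ k * y) (pdvdq p k x).
Proof.
apply: (iffP idP) => [hH|[y hy ->]]; last by rewrite /pdvdq mulrC mulKf // expf_neq0 // P_neq0.
by exists (x / P ^+ k) => //; rewrite mulrC divfK // expf_neq0 // P_neq0.
Qed.

Lemma pdvdq0 x : pdvdq p 0 x = pint x.
Proof. by rewrite /pdvdq expr0 divr1. Qed.

Lemma pdvdqD k x y : pdvdq p k x -> pdvdq p k y -> pdvdq p k (x + y).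
Proof. by rewrite /pdvdq mulrDl; apply: pintD. Qed.

Lemma pdvdqN k x : pdvdq p k x -> pdvdq p k (- x).
Proof. by rewrite /pdvdq mulNr; apply: pintN. Qed.

Lemma pdvdqB k x y : pdvdq p k x -> pdvdq p k y -> pdvdq p k (x - y).
Proof. by move=> hx hy; apply: pdvdqD hx (pdvdqN hy). Qed.

Lemma pdvdqM j k x y : pdvdq p j x -> pdvdq p k y -> pdvdq p (j + k) (x * y).
Proof.
move=> /pdvdqP[a ha ->] /pdvdqP[b hb ->]; apply/pdvdqP; exists (a * b); first exact: pintM.
by rewrite exprD; ring.
Qed.

Lemma pdvdq_mull k a x : pint a -> pdvdq p k x -> pdvdq p k (a * x).
Proof. by rewrite -pdvdq0 => ha hx; have := pdvdqM ha hx. Qed.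

Lemma pdvdq_mulr k a x : pint a -> pdvdq p k x -> pdvdq p k (x * a).
Proof. by rewrite mulrC; apply: pdvdq_mull. Qed.

Lemma pdvdq_le j k x : (j <= k)%N -> pdvdq p k x -> pdvdq p j x.
Proof.
move=> jk /pdvdqP[y hy ->]; apply/pdvdqP; exists (P ^+ (k - j) * y).
  by apply: pintM => //; rewrite -natrX; apply: pint_nat.
by rewrite mulrA -exprD subnKC.
Qed.

Lemma pdvdq_pint k x : pdvdq p k x -> pint x.
Proof. by rewrite -pdvdq0; apply: pdvdq_le. Qed.

Lemma pdvdq_Pk k y : pint y -> pdvdq p k (P ^+ k * y).
Proof. by move=> hH; apply/pdvdqP; exists y. Qed.

Lemma pdvdq00 k : pdvdq p k 0.
Proof. by rewrite -(mulr0 (P ^+ k)); apply: pdvdq_Pk; apply: (pint_nat 0). Qed.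

Lemma prod_congr k n (a b : nat -> rat) :
  (forall i, (i < n)%N -> [/\ pint (a i), pint (b i) & pdvdq p k (a i - b i)]) ->
  pdvdq p k (\prod_(i < n) a i - \prod_(i < n) b i).
Proof.
elim: n => [|n IH] hH; first by rewrite !big_ord0 subrr pdvdq00.
have [ha hb hab] := hH n (ltnSn n).
have IH' := IH (fun i hi => hH i (ltnW hi)).
rewrite !big_ord_recr /=.
have -> : \prod_(i < n) a i * a n - \prod_(i < n) b i * b n =
   \prod_(i < n) a i * (a n - b n) + (\prod_(i < n) a i - \prod_(i < n) b i) * b n by ring.
apply: pdvdqD; first apply: pdvdq_mull => //.
  by apply: pint_prod => i; have [] := hH i (ltnW (ltn_ord i)).
exact: pdvdq_mulr.
Qed.

Lemma prod_lin n (x : nat -> rat) : (forall i, (i < n)%N -> pint (x i)) ->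
  pdvdq p 2 (\prod_(i < n) (1 + P * x i) - (1 + P * \sum_(i < n) x i)).
Proof.
elim: n => [|n IH] hH; first by rewrite big_ord0 big_ord0 mulr0 addr0 subrr pdvdq00.
have IH' := IH (fun i hi => hH i (ltnW hi)).
rewrite big_ord_recr big_ord_recr /=.
set A := \prod_(i < n) _; set S := \sum_(i < n) _.
have -> : A * (1 + P * x n) - (1 + P * (S + x n)) =
   (A - (1 + P * S)) * (1 + P * x n) + P ^+ 2 * (S * x n) by ring.
apply: pdvdqD; first apply: pdvdq_mulr => //.
  by apply: pintD; [apply: (pint_nat 1)| apply: pintM; [apply: pint_nat|apply: hH]].
apply: pdvdq_Pk; apply: pintM; last exact: hH.
by apply: pint_sum => i; apply: hH; exact: ltnW (ltn_ord i).
Qed.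


Lemma hP : P = 2 * h%:R + 1.
Proof. by rewrite hp -addn1 natrD natrD; ring. Qed.

Lemma h_gt0 : (0 < h)%N.
Proof. by have := prime_gt1 pr; rewrite hp; case: h. Qed.

Lemma ndvd_small m j : (0 < j < p)%N -> ~~ (p %| p * m + j)%N.
Proof.
move=> /andP[j0 jp]; rewrite dvdn_addr ?dvdn_mulr //.
by apply/negP => /(dvdn_leq j0); rewrite leqNgt jp.
Qed.

Lemma pint_half : pint (1/2).
Proof.
rewrite div1r; apply: (@pintV_nat 2%N).
apply/negP => /(dvdn_leq (isT : (0 < 2)%N)); have := h_gt0; rewrite hp; lia.
Qed.

Definition Nm (m : nat) : rat :=
  \prod_(i < h) ((P * m%:R + (i%:R + 1/2)) * (P * (m%:R + 1) - (i%:R + 1/2))).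
Definition Dn (m : nat) : nat := \prod_(i < h) ((p * m + i.+1) * (p * m + (p - i.+1)))%N.
Definition Dm (m : nat) : rat := (Dn m)%:R.
Definition Xm (m : nat) : rat := \prod_(k < m) (Nm k / Dm k).
Definition Vm (m t : nat) : rat := \prod_(i < t) fa (p * m + i).

Lemma ndvd_Dn m : ~~ (p %| Dn m)%N.
Proof.
rewrite /Dn; elim/big_ind: _ => //.
- by rewrite dvdn1; apply: contraTneq (prime_gt1 pr) => ->.
- by move=> x y; apply: ndvdM.
move=> i _; apply: ndvdM => //; apply: ndvd_small; have := ltn_ord i; rewrite hp; lia.
Qed.

Lemma Dm_neq0 m : Dm m != 0.
Proof. exact: ndvd_neq0 (ndvd_Dn m). Qed.

Lemma pint_invDm m : pint (Dm m)^-1.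
Proof. exact: pintV_nat (ndvd_Dn m). Qed.

Lemma pint_Nm m : pint (Nm m).
Proof.
apply: pint_prod => i; apply: pintM.
  by apply: pintD; [apply: pintM; apply: pint_nat|apply: pintD; [apply: pint_nat|apply: pint_half]].
apply: pintB; last by apply: pintD; [apply: pint_nat|apply: pint_half].
by apply: pintM; [apply: pint_nat|apply: pintD; [apply: pint_nat|exact: (pint_nat 1)]].
Qed.

Lemma pint_Xm m : pint (Xm m).
Proof. by apply: pint_prod => k; apply: pintM; [apply: pint_Nm|apply: pint_invDm]. Qed.

Lemma pint_Vm m t : (t < p)%N -> pint (Vm m t).
Proof.
move=> tp; rewrite /Vm big_seq; elim/big_ind: _ => //.
- exact: (@pint_nat 1).
- by move=> x y; apply: pintM.
move=> i; rewrite mem_index_enum => _.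
apply: pintM; first by apply: pintD; [apply: pint_nat|apply: pint_half].
rewrite -addnS; apply: pintV_nat => //; apply: ndvd_small; have := ltn_ord i; lia.
Qed.


Lemma prod_p_odd (G : nat -> rat) :
  \prod_(i < p) G i = (\prod_(i < h) (G i * G (h + h - i)%N)) * G h.
Proof. by rewrite hp big_pair_odd. Qed.

Lemma prod_p_even (G : nat -> rat) :
  \prod_(i < p) G i = (\prod_(i < h) (G i * G (h + h - i.+1)%N)) * G (h + h)%N.
Proof. by rewrite hp big_ord_recr /= big_pair. Qed.

Lemma prodNum m : \prod_(i < p) ((p * m + i)%:R + 1/2) = P * (m%:R + 1/2) * Nm m.
Proof.
rewrite (prod_p_odd (fun i => (p * m + i)%:R + 1/2)) /Nm mulrC; congr (_ * _).
  by rewrite natrD natrM hP; field.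
apply: eq_bigr => i _; congr (_ * _); first by rewrite natrD natrM; field.
have ih : (i <= h + h)%N by have := ltn_ord i; lia.
by rewrite natrD natrM natrB // natrD hP; field.
Qed.

Lemma prodDen m : \prod_(i < p) ((p * m + i).+1)%:R = Dm m * (P * (m%:R + 1)) :> rat.
Proof.
rewrite (prod_p_even (fun i => ((p * m + i).+1)%:R)) /Dm /Dn natr_prod; congr (_ * _).
  apply: eq_bigr => i _; rewrite natrM; congr (_ * _); first by rewrite addnS.
  by rewrite -addnS; congr (_%:R); congr (_ + _); have := ltn_ord i; rewrite hp; lia.
by rewrite -addnS -hp natrD natrM; ring.
Qed.

Lemma prodW m : \prod_(i < p) fa (p * m + i) = fa m * Nm m / Dm m.
Proof.
rewrite /fa prodf_div prodNum prodDen -natr1.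
have := Dm_neq0 m; have := P_neq0 => h1 h2.
have h3 : (m%:R + 1 : rat) != 0 by rewrite natr1 pnatr_eq0.
by field; rewrite addrC h3 h2 h1.
Qed.

Lemma alpha_pm m : alpha (p * m) = alpha m * Xm m.
Proof.
elim: m => [|m IH]; first by rewrite muln0 alpha0 /Xm big_ord0 mulr1.
rewrite mulnS [(p + _)%N]addnC alphaD IH prodW alphaS /Xm big_ord_recr /=.
by rewrite !mulrA; ring.
Qed.

Lemma decomp m t : alpha (p * m + t) = alpha m * Xm m * Vm m t.
Proof. by rewrite alphaD alpha_pm. Qed.

Lemma pint_alpha n : pint (alpha n).
Proof.
elim: n {-2}n (leqnn n) => [|N IH] n hn.
  by move: hn; rewrite leqn0 => /eqP ->; rewrite alpha0; exact: (pint_nat 1).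
case: n hn => [|n] hn; first by rewrite alpha0; exact: (pint_nat 1).
rewrite (divn_eq n.+1 p) mulnC decomp.
apply: pintM; last by apply: pint_Vm; rewrite ltn_pmod // prime_gt0.
apply: pintM; last exact: pint_Xm.
apply: IH; have := ltn_Pdiv (prime_gt1 pr) (ltn0Sn n); lia.
Qed.


Lemma Nm_congr m : pdvdq p 2 (Nm m - Nm 0).
Proof.
apply: (prod_congr (a := fun i : nat => (P * m%:R + (i%:R + 1/2)) * (P * (m%:R + 1) - (i%:R + 1/2)))
                   (b := fun i : nat => (P * 0%:R + (i%:R + 1/2)) * (P * (0%:R + 1) - (i%:R + 1/2)))).
move=> i _; split.
- apply: pintM; first by apply: pintD; [apply: pintM; apply: pint_nat|apply: pintD; [apply: pint_nat|apply: pint_half]].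
  apply: pintB; last by apply: pintD; [apply: pint_nat|apply: pint_half].
  by apply: pintM; [apply: pint_nat|apply: pintD; [apply: pint_nat|exact: (pint_nat 1)]].
- apply: pintM; first by apply: pintD; [apply: pintM; apply: pint_nat|apply: pintD; [apply: pint_nat|apply: pint_half]].
  apply: pintB; last by apply: pintD; [apply: pint_nat|apply: pint_half].
  by apply: pintM; [apply: pint_nat|apply: pintD; [apply: pint_nat|exact: (pint_nat 1)]].
have -> : (P * m%:R + (i%:R + 1/2)) * (P * (m%:R + 1) - (i%:R + 1/2)) -
   (P * 0%:R + (i%:R + 1/2)) * (P * (0%:R + 1) - (i%:R + 1/2)) = P ^+ 2 * (m%:R * (m%:R + 1)).
  by rewrite mulr0n; field.
by apply: pdvdq_Pk; apply: pintM; [apply: pint_nat| apply: pintD; [apply: pint_nat|exact: (pint_nat 1)]].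
Qed.

Lemma Dm_rat m : Dm m = \prod_(i < h) ((P * m%:R + (i.+1)%:R) * (P * (m%:R + 1) - (i.+1)%:R)).
Proof.
rewrite /Dm /Dn natr_prod; apply: eq_bigr => i _.
have ip : (i.+1 <= p)%N by have := ltn_ord i; rewrite hp; lia.
by rewrite natrM !natrD natrM natrB //; ring.
Qed.

Lemma Dm_congr m : pdvdq p 2 (Dm m - Dm 0).
Proof.
rewrite !Dm_rat.
apply: (prod_congr (a := fun i : nat => (P * m%:R + (i.+1)%:R) * (P * (m%:R + 1) - (i.+1)%:R))
                   (b := fun i : nat => (P * 0%:R + (i.+1)%:R) * (P * (0%:R + 1) - (i.+1)%:R))).
move=> i _; split.
- apply: pintM; first by apply: pintD; [apply: pintM; apply: pint_nat|apply: pint_nat].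
  apply: pintB; last by apply: pint_nat.
  by apply: pintM; [apply: pint_nat|apply: pintD; [apply: pint_nat|exact: (pint_nat 1)]].
- apply: pintM; first by apply: pintD; [apply: pintM; apply: pint_nat|apply: pint_nat].
  apply: pintB; last by apply: pint_nat.
  by apply: pintM; [apply: pint_nat|apply: pintD; [apply: pint_nat|exact: (pint_nat 1)]].
have -> : (P * m%:R + (i.+1)%:R) * (P * (m%:R + 1) - (i.+1)%:R) -
   (P * 0%:R + (i.+1)%:R) * (P * (0%:R + 1) - (i.+1)%:R) = P ^+ 2 * (m%:R * (m%:R + 1)).
  by rewrite mulr0n; ring.
by apply: pdvdq_Pk; apply: pintM; [apply: pint_nat| apply: pintD; [apply: pint_nat|exact: (pint_nat 1)]].
Qed.

Lemma ratio_congr m : pdvdq p 2 (Nm m / Dm m - Nm 0 / Dm 0).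
Proof.
have e : Nm m / Dm m - Nm 0 / Dm 0 =
  ((Nm m - Nm 0) * Dm 0 - Nm 0 * (Dm m - Dm 0)) * (Dm m)^-1 * (Dm 0)^-1.
  by field; rewrite !Dm_neq0.
rewrite e; apply: pdvdq_mulr; first exact: pint_invDm.
apply: pdvdq_mulr; first exact: pint_invDm.
apply: pdvdqB; first by apply: pdvdq_mulr; [apply: pint_nat|apply: Nm_congr].
by apply: pdvdq_mull; [apply: pint_Nm|apply: Dm_congr].
Qed.


Definition Qn (n : nat) : rat := \prod_(k < n) ((n + k.+1)%:R).

Lemma fact_rat n : (n`!)%:R = \prod_(k < n) (k.+1)%:R :> rat.
Proof.
elim: n => [|n IH]; first by rewrite big_ord0 fact0.
by rewrite big_ord_recr /= -IH factS natrM mulrC.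
Qed.

Lemma QnS n : (n.+1)%:R * Qn n.+1 = Qn n * (n + n.+1)%:R * (n.+1 + n.+1)%:R.
Proof.
rewrite /Qn.
have e1 : \prod_(k < n.+1) ((n + k.+1)%:R : rat) = \prod_(k < n) ((n + k.+1)%:R : rat) * (n + n.+1)%:R.
  by rewrite big_ord_recr.
have e2 : \prod_(k < n.+1) ((n + k.+1)%:R : rat) = (n + 1)%:R * \prod_(k < n) ((n + k.+2)%:R : rat).
  by rewrite big_ord_recl.
rewrite -e1 e2 big_ord_recr /= addn1 mulrA; congr (_ * _ * _).
by apply: eq_bigr => i _; rewrite addSn -addnS.
Qed.

Lemma alpha4 n : alpha n * 4 ^+ n * (n`!)%:R = Qn n.
Proof.
elim: n => [|n IH]; first by rewrite alpha0 /Qn big_ord0 expr0 fact0 !mulr1.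
have hn : (n.+1)%:R != 0 :> rat by rewrite pnatr_eq0.
apply: (mulfI hn); rewrite QnS -IH alphaS /fa factS natrM exprS.
rewrite -!natr1 !natrD -!natr1 in hn *.
by field.
Qed.

Lemma ndvd_lt j : (0 < j < p)%N -> ~~ (p %| j)%N.
Proof. by move=> hj; have := ndvd_small 0 hj; rewrite muln0 add0n. Qed.

Lemma two_alpha_p : Nm 0 / Dm 0 = 2 * alpha p.
Proof.
have := alphaD 0 p; rewrite add0n alpha0 mul1r => ->.
have := prodW 0; rewrite muln0 => ->.
by rewrite /fa add0r divr1 div1r !mulrA divff ?mul1r // pnatr_eq0.
Qed.

Lemma Qp_prod : Qn p / (p`!)%:R = 2 * \prod_(k < p.-1) (1 + P * ((k.+1)%:R)^-1).
Proof.
rewrite fact_rat /Qn -prodf_div hp /= big_ord_recr /= mulrC; congr (_ * _).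
  by rewrite addnn -muln2 natrM mulrAC divff ?mul1r // pnatr_eq0.
by apply: eq_bigr => i _; rewrite natrD; field; rewrite addrC natr1 pnatr_eq0.
Qed.

Lemma harm_p : pdvdq p 1 (\sum_(k < p.-1) ((k.+1)%:R)^-1).
Proof.
have -> : p.-1 = (h + h)%N by rewrite hp.
rewrite (big_pair _ _ (fun k : nat => ((k.+1)%:R)^-1 : rat)) /=.
have e : forall k : 'I_h, ((k.+1)%:R)^-1 + (((h + h - k.+1).+1)%:R)^-1
          = P * (((k.+1)%:R)^-1 * (((h + h - k)%N)%:R)^-1) :> rat.
  move=> k; have kh := ltn_ord k.
  have -> : ((h + h - k.+1).+1 = h + h - k)%N by lia.
  have en : ((h + h - k) + k.+1 = p)%N by rewrite hp; lia.
  rewrite -en natrD; field.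
  by rewrite addrC natr1 !pnatr_eq0 andbT; apply/eqP; lia.
rewrite (eq_bigr _ (fun k _ => e k)) -mulr_sumr -[P]expr1.
apply: pdvdq_Pk; apply: pint_sum => k; have kh := ltn_ord k.
by apply: pintM; apply: pintV_nat; apply: ndvd_lt; rewrite hp; lia.
Qed.

Lemma Babbage : pdvdq p 2 (Qn p / (p`!)%:R - 2).
Proof.
rewrite Qp_prod.
have hl := prod_lin (n := p.-1) (x := fun k => ((k.+1)%:R)^-1).
have /pdvdqP [y hy hS] := harm_p.
have -> : 2 * \prod_(k < p.-1) (1 + P * ((k.+1)%:R)^-1) - 2 =
   2 * (\prod_(k < p.-1) (1 + P * ((k.+1)%:R)^-1) - (1 + P * \sum_(k < p.-1) ((k.+1)%:R)^-1))
   + P ^+ 2 * (2 * y).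
  by rewrite hS; ring.
apply: pdvdqD; last by apply: pdvdq_Pk; apply: pintM => //; exact: (pint_nat 2).
apply: pdvdq_mull; first exact: (pint_nat 2).
apply: hl => i ip; apply: pintV_nat; apply: ndvd_lt; move: ip; rewrite hp /=; lia.
Qed.


Lemma four_ndvd k : ~~ (p %| 4 ^ k)%N.
Proof.
have cop : coprime 4 p.
  by rewrite -[4%N]/(2 ^ 2)%N coprime_pexpl // coprime2n hp /= addnn odd_double.
by rewrite -prime_coprime // coprime_sym coprimeXl.
Qed.

Lemma gam_nat : exists c : nat, gammap p = c%:R.
Proof.
have cop : coprime 4 p.
  by rewrite -[4%N]/(2 ^ 2)%N coprime_pexpl // coprime2n hp /= addnn odd_double.
have := Euler_exp_totient cop; rewrite totient_prime // => /eqP.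
rewrite eqn_mod_dvd ?expn_gt0 // => /dvdnP [c hc].
have e : ((4 : rat) ^+ p.-1 - 1) = ((4 ^ p.-1 - 1)%N)%:R by rewrite natrB ?expn_gt0 // natrX.
exists c; rewrite /gammap e hc natrM.
by rewrite mulfK // P_neq0.
Qed.

Lemma pint_gam : pint (gammap p).
Proof. by have [c ->] := gam_nat; apply: pint_nat. Qed.

Lemma four_pow : (4 : rat) ^+ p.-1 = 1 + gammap p * P.
Proof. by rewrite /gammap divfK ?P_neq0 //; ring. Qed.

Lemma pint_inv4 : pint (((4 : rat) ^+ p.-1)^-1).
Proof. by rewrite -[4 : rat]/(4%:R) -natrX; apply: pintV_nat; apply: four_ndvd. Qed.

Lemma base_congr : pdvdq p 2 (Nm 0 / Dm 0 - (1 + P * (- gammap p))).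
Proof.
have /pdvdqP [e he hB] := Babbage.
have hF : (p`!)%:R != 0 :> rat by rewrite pnatr_eq0 -lt0n fact_gt0.
have h4 : (4 : rat) ^+ p.-1 != 0 by rewrite expf_neq0 // pnatr_eq0.
have hQ : Qn p = (p`!)%:R * (2 + P ^+ 2 * e).
  by rewrite -hB; field.
have ha : alpha p = Qn p / ((4 : rat) ^+ p * (p`!)%:R).
  by rewrite -alpha4; field; rewrite hF expf_neq0 // pnatr_eq0.
have e4 : (4 : rat) ^+ p = 4 * 4 ^+ p.-1 by rewrite -exprS prednK // prime_gt0.
rewrite two_alpha_p ha hQ e4.
have -> : 2 * ((p`!)%:R * (2 + P ^+ 2 * e) / (4 * 4 ^+ p.-1 * (p`!)%:R)) - (1 + P * - gammap p)
   = P ^+ 2 * ((e / 2 + gammap p ^+ 2) * ((4 : rat) ^+ p.-1)^-1).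
  move: h4; rewrite four_pow => h4; field.
  by rewrite h4 hF.
apply: pdvdq_Pk; apply: pintM; last exact: pint_inv4.
apply: pintD; last by apply: pintM; apply: pint_gam.
by apply: pintM => //; rewrite -div1r; apply: pint_half.
Qed.

Lemma Xm_congr m : pdvdq p 2 (Xm m - (1 - gammap p * P * m%:R)).
Proof.
have hc := prod_congr (k := 2) (n := m) (a := fun k => Nm k / Dm k) (b := fun _ => 1 + P * - gammap p).
have hl := prod_lin (n := m) (x := fun _ => - gammap p).
have -> : Xm m - (1 - gammap p * P * m%:R) =
  (Xm m - \prod_(k < m) (1 + P * - gammap p)) +
  (\prod_(k < m) (1 + P * - gammap p) - (1 + P * \sum_(k < m) (- gammap p))).
  by rewrite sumr_const card_ord -mulr_natr; ring.
apply: pdvdqD; last by apply: hl => i _; apply: pintN; apply: pint_gam.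
apply: hc => i _; split.
- by apply: pintM; [apply: pint_Nm|apply: pint_invDm].
- by apply: pintD; [exact: (pint_nat 1)|apply: pintM; [apply: pint_nat|apply: pintN; apply: pint_gam]].
have -> : Nm i / Dm i - (1 + P * - gammap p) = (Nm i / Dm i - Nm 0 / Dm 0) + (Nm 0 / Dm 0 - (1 + P * - gammap p)) by ring.
by apply: pdvdqD; [apply: ratio_congr|apply: base_congr].
Qed.


Lemma pint_fa n : ~~ (p %| n.+1)%N -> pint (fa n).
Proof.
move=> hn; apply: pintM; first by apply: pintD; [apply: pint_nat|apply: pint_half].
exact: pintV_nat.
Qed.

Lemma pint_fa_pm m j : (j.+1 < p)%N -> pint (fa (p * m + j)).
Proof. by move=> hj; apply: pint_fa; rewrite -addnS; apply: ndvd_small; rewrite hj andbT. Qed.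

Lemma pint_prod_fa m k (F : nat -> nat) : (forall i, (i < k)%N -> (F i).+1 < p)%N ->
  pint (\prod_(i < k) fa (p * m + F i)).
Proof.
move=> hF; rewrite big_seq; elim/big_ind: _ => //.
- exact: (pint_nat 1).
- by move=> x y; apply: pintM.
by move=> i _; apply: pint_fa_pm; apply: hF.
Qed.

Lemma Vm_big m t : (t < p)%N -> (p < 2 * t)%N -> pdvdq p 1 (Vm m t).
Proof.
move=> tp pt.
have -> : t = (h.+1 + (t - h.+1))%N by move: pt; rewrite hp; lia.
rewrite /Vm big_split_ord big_ord_recr /=.
apply: pdvdq_mulr.
  by apply: (@pint_prod_fa m _ (fun i => h.+1 + i)%N) => i hi; move: pt tp hi; rewrite hp; lia.
apply: pdvdq_mull.
  by apply: (@pint_prod_fa m _ (fun i => i)) => i hi; move: hi; rewrite hp; lia.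
have e : ((p * m + h)%N%:R + 1/2 : rat) = P * (m%:R + 1/2).
  by rewrite natrD natrM hP; field.
rewrite /fa e -mulrA -[P]expr1; apply: pdvdq_Pk; apply: pintM.
  by apply: pintD; [apply: pint_nat|apply: pint_half].
by apply: pintV_nat; rewrite -addnS; apply: ndvd_small; rewrite hp; apply/andP; split => //; lia.
Qed.

Definition gi (i : nat) : rat := (i%:R + 1/2)^-1 - ((i.+1)%:R)^-1.

Lemma pint_gi i : (i.*2.+1 < p)%N -> pint (gi i).
Proof.
move=> hi.
have e : (i%:R + 1/2 : rat) = (i.*2.+1)%:R / 2.
  by rewrite -[i.*2]muln2 -[((i * 2).+1)%:R]natr1 natrM; field.
rewrite /gi e invf_div; apply: pintB.
  apply: pintM; first exact: (pint_nat 2).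
  by apply: pintV_nat; apply: ndvd_lt; rewrite hi andbT.
by apply: pintV_nat; apply: ndvd_lt; rewrite ltn0Sn /=; move: hi; lia.
Qed.

Definition term (j : nat) : rat := (-1) ^+ (j.-1) / j%:R.

Lemma SnS n : \sum_(1 <= j < n.+2) term j = \sum_(1 <= j < n.+1) term j + term n.+1.
Proof. by rewrite big_nat_recr. Qed.

Lemma sum_gi t : \sum_(i < t) gi i = 2 * \sum_(1 <= j < (2 * t).+1) ((-1) ^+ (j.-1) / j%:R).
Proof.
rewrite -/(\sum_(1 <= j < (2 * t).+1) term j).
elim: t => [|t IH]; first by rewrite big_ord0 muln0 big_geq // mulr0.
have -> : (2 * t.+1).+1 = ((2 * t).+2).+1 by lia.
have e1 : (-1 : rat) ^+ (2 * t) = 1 by rewrite exprM sqrrN expr1n.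
have e2 : (-1 : rat) ^+ (2 * t).+1 = -1 by rewrite exprS e1 mulr1.
rewrite big_ord_recr /= IH SnS SnS /term /= e1 e2 /gi.
rewrite -[((2 * t).+1)%:R]natr1 -[((2 * t).+2)%:R]natr1 -[((2 * t).+1)%:R]natr1 -[(t.+1)%:R]natr1 natrM.
have ht : (0 : rat) <= t%:R := ler0n _ _.
by field; apply/and3P; split; apply: lt0r_neq0; lra.
Qed.


Lemma Vm_small m t : (2 * t < p)%N ->
  pdvdq p 2 (Vm m t - alpha t * (1 + P * (m%:R * \sum_(i < t) gi i))).
Proof.
move=> tp.
have hat : alpha t = \prod_(i < t) fa i.
  rewrite -[t]add0n alphaD alpha0 mul1r; apply: eq_bigr => i _; by rewrite add0n.
have hsplit : \prod_(i < t) (fa i * (1 + P * (m%:R * gi i))) =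
    alpha t * \prod_(i < t) (1 + P * (m%:R * gi i)) by rewrite big_split hat.
have -> : Vm m t - alpha t * (1 + P * (m%:R * \sum_(i < t) gi i)) =
   (Vm m t - \prod_(i < t) (fa i * (1 + P * (m%:R * gi i)))) +
   alpha t * (\prod_(i < t) (1 + P * (m%:R * gi i)) - (1 + P * \sum_(i < t) (m%:R * gi i))).
  by rewrite hsplit -mulr_sumr; ring.
apply: pdvdqD; last first.
  apply: pdvdq_mull; first exact: pint_alpha.
  apply: (prod_lin (x := fun i => m%:R * gi i)) => i hi; apply: pintM; first exact: pint_nat.
  by apply: pint_gi; rewrite -muln2; lia.
apply: (prod_congr (a := fun i => fa (p * m + i)) (b := fun i => fa i * (1 + P * (m%:R * gi i)))) => i hi.
have i1p : (i.+1 < p)%N by lia.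
split.
- exact: pint_fa_pm.
- apply: pintM; first by apply: pint_fa; apply: ndvd_lt; rewrite ltn0Sn.
  apply: pintD; first exact: (pint_nat 1).
  apply: pintM; first exact: pint_nat.
  apply: pintM; first exact: pint_nat.
  by apply: pint_gi; rewrite -muln2; lia.
have pw : pint (- (m%:R ^+ 2) / 2 * ((i.+1)%:R)^-1 * ((i.+1)%:R)^-1 * (((p * m + i).+1)%:R)^-1).
  apply: pintM; last by apply: pintV_nat; rewrite -addnS; apply: ndvd_small; rewrite ltn0Sn.
  apply: pintM; last by apply: pintV_nat; apply: ndvd_lt; rewrite ltn0Sn.
  apply: pintM; last by apply: pintV_nat; apply: ndvd_lt; rewrite ltn0Sn.
  apply: pintM; first by apply: pintN; rewrite -natrX; apply: pint_nat.
  by rewrite -div1r; apply: pint_half.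
have E1 : ((p * m + i)%:R : rat) = P * m%:R + i%:R by rewrite natrD natrM.
have E2 : (((p * m + i).+1)%:R : rat) = P * m%:R + i%:R + 1 by rewrite -natr1 E1.
have E3 : ((i.+1)%:R : rat) = i%:R + 1 by rewrite natr1.
have hpm : (0 : rat) <= P * m%:R by apply: mulr_ge0; apply: ler0n.
have hi0 : (0 : rat) <= i%:R := ler0n _ _.
have -> : fa (p * m + i) - fa i * (1 + P * (m%:R * gi i)) =
   P ^+ 2 * (- (m%:R ^+ 2) / 2 * ((i.+1)%:R)^-1 * ((i.+1)%:R)^-1 * (((p * m + i).+1)%:R)^-1).
  rewrite /fa /gi E1 E2 E3.
  by field; apply/and3P; split; apply: lt0r_neq0; lra.
exact: pdvdq_Pk.
Qed.

Lemma main_big r m t : r = (p * m + t)%N -> (t < p)%N -> (p < 2 * t)%N -> pdvdq p 1 (alpha r).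
Proof.
move=> -> tp pt; rewrite decomp; apply: pdvdq_mull; last exact: Vm_big.
by apply: pintM; [apply: pint_alpha|apply: pint_Xm].
Qed.

Lemma main_small r m t : r = (p * m + t)%N -> (2 * t < p)%N ->
  pcongr p 2 (alpha r)
    (alpha m * alpha t *
     (1 - gammap p * P * m%:R
        + 2 * P * m%:R * \sum_(1 <= j < (2 * t).+1) ((-1) ^+ (j.-1) / j%:R))).
Proof.
move=> -> tp; rewrite /pcongr decomp.
set S := \sum_(1 <= j < (2 * t).+1) _.
have hS : \sum_(i < t) gi i = 2 * S by rewrite sum_gi.
have pS : pint S.
  have -> : S = (\sum_(i < t) gi i) * (1 / 2) by rewrite hS; field.
  apply: pintM; last exact: pint_half.
  apply: pint_sum => i; apply: pint_gi; have := ltn_ord i; rewrite -muln2; lia.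
have /pdvdqP [e1 pe1 hx] := Xm_congr m.
have /pdvdqP [e2 pe2 hv] := Vm_small m tp.
have XX : Xm m = (1 - gammap p * P * m%:R) + P ^+ 2 * e1 by rewrite -hx; ring.
have VV : Vm m t = alpha t * (1 + P * (m%:R * (2 * S))) + P ^+ 2 * e2 by rewrite -hS -hv; ring.
rewrite XX VV.
set g := gammap p; set a := alpha t; set A := alpha m.
have -> : A * (1 - g * P * m%:R + P ^+ 2 * e1) * (a * (1 + P * (m%:R * (2 * S))) + P ^+ 2 * e2) -
    A * a * (1 - g * P * m%:R + 2 * P * m%:R * S) =
    P ^+ 2 * (A * (- (2 * g * m%:R ^+ 2 * a * S) + e1 * (a * (1 + P * (m%:R * (2 * S))) + P ^+ 2 * e2)
                 + (1 - g * P * m%:R) * e2)) by ring.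
apply: pdvdq_Pk; apply: pintM; first exact: pint_alpha.
have pg : pint g := pint_gam.
have pa : pint a := pint_alpha t.
have p2 : pint (2 : rat) := pint_nat 2.
have pP : pint P := pint_nat p.
have pm : pint m%:R := pint_nat m.
apply: pintD; first apply: pintD.
- apply: pintN; apply: pintM => //; apply: pintM => //; apply: pintM => //; last by rewrite -natrX; apply: pint_nat.
  exact: pintM.
- apply: pintM => //; apply: pintD; last by apply: pintM => //; rewrite -natrX; apply: pint_nat.
  apply: pintM => //; apply: pintD; first exact: (pint_nat 1).
  by apply: pintM => //; apply: pintM => //; apply: pintM.
apply: pintM => //; apply: pintB; first exact: (pint_nat 1).
by apply: pintM => //; apply: pintM.
Qed.

End Padic.

Unset Implicit Arguments.

Theorem lemma2p5 (p r r' t : nat) :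
  prime p -> odd p -> r = (p * r' + t)%N -> (t < p)%N ->
  ((p < 2 * t)%N -> pdvdq p 1 (alpha r)) /\
  ((2 * t < p)%N ->
     pcongr p 2 (alpha r)
       (alpha r' * alpha t *
        (1 - gammap p * p%:R * r'%:R
           + 2 * p%:R * r'%:R *
             \sum_(1 <= j < (2 * t).+1) ((-1) ^+ (j.-1) / j%:R)))).
Proof.
move=> pr op hr tp.
have hp : p = (p./2 + p./2).+1.
  by rewrite addnn -[in LHS](odd_double_half p) op add1n.
split => H.
  exact: (main_big pr hp hr tp H).
exact: (main_small pr hp hr H).
Qed.
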